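(* Let $(\mathcal{S},\mathcal{R})$ be a complete positive presentation satisfying the following two conditions: (C) $\mathcal{R}$ contains no relation of the form $su=sv$ or $us=vs$ with $s\in\mathcal{S}$, $u,v\in\mathcal{S}^*$ and $u\neq v$; (E$_r$) there exists a set $\mathcal{S}'$ with $\mathcal{S}\subseteq\mathcal{S}'\subseteq\mathcal{S}^*$ such that for all $u,v\in\mathcal{S}'$ there exist $u',v'\in\mathcal{S}'$ satisfying $(uv')^{-1}(vu')\curvearrowright_r\varepsilon$. Then the monoid $\mathrm{Mon}(\mathcal{S};\mathcal{R})$ embeds in a group of fractions.
   Context: A positive presentation is a pair $(\mathcal{S},\mathcal{R})$ where $\mathcal{S}$ is a nonempty set of letters and $\mathcal{R}$ is a family of relations $u=v$, i.e. unordered pairs $\{u,v\}$ of nonempty words in the free monoid $\mathcal{S}^*$ (letters are regarded as length-one words). $\varepsilon$ denotes the empty word; $\equiv$ is the smallest congruence on $\mathcal{S}^*$ containing all pairs of $\mathcal{R}$, and $\mathrm{Mon}(\mathcal{S};\mathcal{R})=\mathcal{S}^*/{\equiv}$. Let $\mathcal{S}^{-1}=\{s^{-1}:s\in\mathcal{S}\}$ be a disjoint copy of $\mathcal{S}$; for $u\in\mathcal{S}^*$, $u^{-1}$ is obtained by reversing the order of the letters of $u$ and replacing each $s$ by $s^{-1}$. Right reversing: $\mathbf{w}\curvearrowright_r\mathbf{w}'$ (words on $\mathcal{S}\cup\mathcal{S}^{-1}$) if $\mathbf{w}'$ is obtained from $\mathbf{w}$ by finitely many steps, each deleting a subword $u^{-1}u$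 ($u\in\mathcal{S}^*$ nonempty) or replacing a subword $u^{-1}v$ ($u,v\in\mathcal{S}^*$ nonempty) by $v'u'^{-1}$ where $uv'=vu'$ is a relation of $\mathcal{R}$. Left reversing: $\mathbf{w}\curvearrowright_l\mathbf{w}'$ if $\mathbf{w}'$ is obtained by finitely many steps, each deleting a subword $uu^{-1}$ ($u$ nonempty) or replacing a subword $uv^{-1}$ ($u,v$ nonempty) by $v'^{-1}u'$ where $v'u=u'v$ is a relation of $\mathcal{R}$. $(\mathcal{S},\mathcal{R})$ is $r$-complete if for all $u,v,u',v'\in\mathcal{S}^*$ with $uv'\equiv vu'$ there exist $u'',v'',w\in\mathcal{S}^*$ with $u^{-1}v\curvearrowright_r v''u''^{-1}$, $u'\equiv u''w$, $v'\equiv v''w$; it is $l$-complete if for all $u,v,u',v'$ with $v'u\equiv u'v$ there exist $u'',v'',w$ with $uv^{-1}\curvearrowright_l v''^{-1}u''$, $u'\equiv wu''$, $v'\equiv wv''$; it is complete if it is both. A monoid $M$ embeds in a group of fractions if there is a group $G$ containing (an isomorphic copy of) $M$ as a submonoid such that every element of $G$ has the form $xy^{-1}$ with $x,y\in M$. *)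

(* Defs.v *)
From Stdlib Require Import List.
Import ListNotations.
Set Implicit Arguments.

Section Presentations.
Variable S : Type.

Definition word := list S.

Definition rel (R : word -> word -> Prop) (x y : word) : Prop := R x y \/ R y x.

Definition positive_rels (R : word -> word -> Prop) : Prop :=
  forall x y, R x y -> x <> [] /\ y <> [].

Inductive cong (R : word -> word -> Prop) : word -> word -> Prop :=
| cong_rel : forall a b x y, R x y -> cong R (a ++ x ++ b) (a ++ y ++ b)
| cong_refl : forall x, cong R x x
| cong_sym : forall x y, cong R x y -> cong R y x
| cong_trans : forall x y z, cong R x y -> cong R y z -> cong R x z.

(* Signed words on S ∪ S^{-1}: inl s = s, inr s = s^{-1}. *)
Definition sword := list (S + S).
Definition pos (u : word) : sword := map inl u.
Definition neg (u : word) : sword := rev (map inr u).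

Inductive rrev_step (R : word -> word -> Prop) : sword -> sword -> Prop :=
| rrev_del : forall w1 w2 u, u <> [] ->
    rrev_step R (w1 ++ neg u ++ pos u ++ w2) (w1 ++ w2)
| rrev_rel : forall w1 w2 u v u' v', u <> [] -> v <> [] ->
    rel R (u ++ v') (v ++ u') ->
    rrev_step R (w1 ++ neg u ++ pos v ++ w2) (w1 ++ pos v' ++ neg u' ++ w2).

Inductive lrev_step (R : word -> word -> Prop) : sword -> sword -> Prop :=
| lrev_del : forall w1 w2 u, u <> [] ->
    lrev_step R (w1 ++ pos u ++ neg u ++ w2) (w1 ++ w2)
| lrev_rel : forall w1 w2 u v u' v', u <> [] -> v <> [] ->
    rel R (v' ++ u) (u' ++ v) ->
    lrev_step R (w1 ++ pos u ++ neg v ++ w2) (w1 ++ neg v' ++ pos u' ++ w2).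

Inductive star (step : sword -> sword -> Prop) : sword -> sword -> Prop :=
| star_refl : forall w, star step w w
| star_step : forall w1 w2 w3, step w1 w2 -> star step w2 w3 -> star step w1 w3.

Definition rrev R := star (rrev_step R).
Definition lrev R := star (lrev_step R).

Definition r_complete (R : word -> word -> Prop) : Prop :=
  forall u v u' v' : word, cong R (u ++ v') (v ++ u') ->
    exists u'' v'' w : word,
      rrev R (neg u ++ pos v) (pos v'' ++ neg u'') /\
      cong R u' (u'' ++ w) /\ cong R v' (v'' ++ w).

Definition l_complete (R : word -> word -> Prop) : Prop :=
  forall u v u' v' : word, cong R (v' ++ u) (u' ++ v) ->
    exists u'' v'' w : word,
      lrev R (pos u ++ neg v) (neg v'' ++ pos u'') /\
      cong R u' (w ++ u'') /\ cong R v' (w ++ v'').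

Definition complete R := r_complete R /\ l_complete R.

Definition cond_C (R : word -> word -> Prop) : Prop :=
  forall x y, R x y ->
    (forall (s : S) (u v : word), x = s :: u -> y = s :: v -> u = v) /\
    (forall (s : S) (u v : word), x = u ++ [s] -> y = v ++ [s] -> u = v).

Definition cond_Er (R : word -> word -> Prop) : Prop :=
  exists S' : word -> Prop,
    (forall s : S, S' [s]) /\
    forall u v, S' u -> S' v ->
      exists u' v', S' u' /\ S' v' /\
        rrev R (neg (u ++ v') ++ pos (v ++ u')) [].

End Presentations.

Record group := Group {
  gcar :> Type;
  gmul : gcar -> gcar -> gcar;
  gone : gcar;
  ginv : gcar -> gcar;
  gmulA : forall x y z, gmul x (gmul y z) = gmul (gmul x y) z;
  gmul1l : forall x, gmul gone x = x;
  gmul1r : forall x, gmul x gone = x;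
  gmulVl : forall x, gmul (ginv x) x = gone;
  gmulVr : forall x, gmul x (ginv x) = gone
}.

(* Mon(S;R) = S^*/≡ embeds in a group of fractions: there is a group G and a
   monoid morphism phi : S^* -> G whose kernel congruence is exactly ≡ (so
   S^*/≡ is isomorphic to the submonoid phi(S^* ) of G) and every element of G
   is phi x * (phi y)^{-1}. *)
Definition embeds_in_group_of_fractions (S : Type) (R : word S -> word S -> Prop) : Prop :=
  exists (G : group) (phi : word S -> G),
    phi [] = gone G /\
    (forall u v, phi (u ++ v) = gmul G (phi u) (phi v)) /\
    (forall u v, phi u = phi v <-> cong R u v) /\
    (forall g : G, exists x y, g = gmul G (phi x) (ginv G (phi y))).

(* Main.v *)
Require Import Defs.
From Stdlib Require Import List Lia FunctionalExtensionality PropExtensionality ProofIrrelevance IndefiniteDescription.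
Import ListNotations.


Lemma cong_app_l {S} (R : word S -> word S -> Prop) a x y :
  cong R x y -> cong R (a ++ x) (a ++ y).
Proof.
  induction 1.
  - rewrite (app_assoc a a0 (x ++ b)), (app_assoc a a0 (y ++ b)). apply cong_rel. auto.
  - apply cong_refl.
  - apply cong_sym; auto.
  - eapply cong_trans; eauto.
Qed.

Lemma cong_app_r {S} (R : word S -> word S -> Prop) b x y :
  cong R x y -> cong R (x ++ b) (y ++ b).
Proof.
  induction 1.
  - rewrite <- !app_assoc. apply cong_rel. auto.
  - apply cong_refl.
  - apply cong_sym; auto.
  - eapply cong_trans; eauto.
Qed.

Lemma cong_app {S} (R : word S -> word S -> Prop) a b x y :
  cong R a b -> cong R x y -> cong R (a ++ x) (b ++ y).
Proof.
  intros H1 H2. eapply cong_trans. apply cong_app_r; eauto. apply cong_app_l; auto.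
Qed.

Lemma cong_R {S} (R : word S -> word S -> Prop) x y : R x y -> cong R x y.
Proof.
  intro H. pose proof (@cong_rel _ R [] [] x y H). simpl in H0. rewrite !app_nil_r in H0. exact H0.
Qed.

Lemma cong_rel' {S} (R : word S -> word S -> Prop) x y : rel R x y -> cong R x y.
Proof. intros [H|H]. apply cong_R; auto. apply cong_sym, cong_R; auto. Qed.

Lemma cong_nil {S} (R : word S -> word S -> Prop) : positive_rels R ->
  forall x y, cong R x y -> (x = [] <-> y = []).
Proof.
  intros HP x y H. induction H.
  - destruct (HP _ _ H) as [H1 H2]. split; intro E; exfalso;
    apply (f_equal (@length S)) in E; rewrite !length_app in E; simpl in E;
    [destruct x|destruct y]; simpl in *; try congruence; lia.
  - tauto.
  - tauto.
  - tauto.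
Qed.

Definition peq {S} (R : word S -> word S -> Prop) (x y : word S * word S) :=
  cong R (fst x) (fst y) /\ cong R (snd x) (snd y).

Definition TL {S} (R : word S -> word S -> Prop) (l : S + S) (x y : word S * word S) : Prop :=
  match l with
  | inl s => cong R (s :: fst x) (fst y) /\ cong R (snd x) (snd y)
  | inr s => exists t, cong R (s :: fst y) (fst x ++ t) /\ cong R (snd y) (snd x ++ t)
  end.

Fixpoint T {S} (R : word S -> word S -> Prop) (w : sword S) x z : Prop :=
  match w with
  | [] => peq R x z
  | l :: w' => exists y, T R w' x y /\ TL R l y z
  end.

Ltac ctac := repeat (first [ eapply cong_trans; [eassumption|] | apply cong_refl]).

Lemma peq_sym {S} (R : word S -> word S -> Prop) x y : peq R x y -> peq R y x.
Proof. intros [H1 H2]; split; apply cong_sym; auto. Qed.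
Lemma peq_trans {S} (R : word S -> word S -> Prop) x y z : peq R x y -> peq R y z -> peq R x z.
Proof. intros [H1 H2] [H3 H4]; split; eapply cong_trans; eauto. Qed.
Lemma peq_refl {S} (R : word S -> word S -> Prop) x : peq R x x.
Proof. split; apply cong_refl. Qed.

Lemma TL_in {S} (R : word S -> word S -> Prop) l x x' y : peq R x x' -> TL R l x y -> TL R l x' y.
Proof.
  intros [H1 H2]. destruct l as [s|s]; simpl.
  - intros [H3 H4]. split; eapply cong_trans; [| eauto | apply cong_sym; eauto | eauto].
    change (s :: fst x') with ([s] ++ fst x'). change (s :: fst x) with ([s] ++ fst x).
    apply cong_app_l. apply cong_sym; auto.
  - intros [t [H3 H4]]. exists t. split; eapply cong_trans; eauto; apply cong_app_r; auto.
Qed.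

Lemma TL_out {S} (R : word S -> word S -> Prop) l x y y' : TL R l x y -> peq R y y' -> TL R l x y'.
Proof.
  intros H [H1 H2]. destruct l as [s|s]; simpl in *.
  - destruct H as [H3 H4]. split; eapply cong_trans; eauto.
  - destruct H as [t [H3 H4]]. exists t. split; eapply cong_trans; eauto.
    + change (s :: fst y') with ([s] ++ fst y'). change (s :: fst y) with ([s] ++ fst y).
      apply cong_app_l. apply cong_sym; auto.
    + apply cong_sym; auto.
Qed.

Lemma T_out {S} (R : word S -> word S -> Prop) w x y y' : T R w x y -> peq R y y' -> T R w x y'.
Proof.
  destruct w; simpl.
  - apply peq_trans.
  - intros [z [H1 H2]] H. exists z. split; auto. eapply TL_out; eauto.
Qed.

Lemma T_in {S} (R : word S -> word S -> Prop) w x x' y : peq R x x' -> T R w x y -> T R w x' y.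
Proof.
  revert y. induction w; simpl; intros y Hx.
  - intro. eapply peq_trans; eauto. apply peq_sym; auto.
  - intros [z [H1 H2]]. exists z. split; auto.
Qed.

Lemma T_app {S} (R : word S -> word S -> Prop) a b x z :
  T R (a ++ b) x z <-> exists y, T R b x y /\ T R a y z.
Proof.
  revert z. induction a; simpl; intro z; split.
  - intro H. exists z. split; auto. apply peq_refl.
  - intros [y [H1 H2]]. eapply T_out; eauto.
  - intros [y [H1 H2]]. apply IHa in H1. destruct H1 as [y' [H3 H4]].
    exists y'. split; auto. exists y; auto.
  - intros [y [H1 [y' [H2 H3]]]]. exists y'. split; auto. apply IHa. eauto.
Qed.

Lemma T_pos {S} (R : word S -> word S -> Prop) a p q z :
  T R (pos a) (p, q) z <-> peq R z (a ++ p, q).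
Proof.
  revert z. induction a; simpl; intro z.
  - split; apply peq_sym.
  - split.
    + intros [y [H1 [H2 H3]]]. apply IHa in H1. destruct H1 as [H4 H5]. simpl in *.
      split; simpl; apply cong_sym.
      * eapply cong_trans; [|eauto].
        change (a :: a0 ++ p) with ([a] ++ (a0 ++ p)). change (a :: fst y) with ([a] ++ fst y).
        apply cong_app_l. apply cong_sym; auto.
      * eapply cong_trans; [|eauto]. apply cong_sym; auto.
    + intros [H1 H2]. exists (a0 ++ p, q). split. apply IHa. apply peq_refl.
      simpl in *. split; apply cong_sym; auto.
Qed.

Lemma neg_cons {S} (s : S) a : neg (s :: a) = neg a ++ [inr s].
Proof. reflexivity. Qed.

Lemma T_single {S} (R : word S -> word S -> Prop) l x y : T R [l] x y <-> TL R l x y.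
Proof.
  simpl. split.
  - intros [z [H1 H2]]. eapply TL_in; eauto. apply peq_sym; auto.
  - intro H. exists x. split; auto. apply peq_refl.
Qed.

Lemma T_neg_fwd {S} (R : word S -> word S -> Prop) a p q p' q' :
  T R (neg a) (p, q) (p', q') -> exists t, cong R (a ++ p') (p ++ t) /\ cong R q' (q ++ t).
Proof.
  revert p q p' q'. induction a as [|s a IH]; intros p q p' q'.
  - simpl. unfold peq; simpl.
    intros [H1 H2]. exists []. rewrite !app_nil_r. split; apply cong_sym; auto.
  - rewrite neg_cons. intro H. apply T_app in H. destruct H as [[p1 q1] [H1 H2]].
    apply T_single in H1. destruct H1 as [t1 [H3 H4]]. simpl in *.
    destruct (IH _ _ _ _ H2) as [t2 [H5 H6]].
    exists (t1 ++ t2). split.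
    + eapply cong_trans. change (s :: a ++ p') with ([s] ++ (a ++ p')). apply cong_app_l. exact H5.
      rewrite (app_assoc [s] p1 t2), (app_assoc p t1 t2). apply cong_app_r. exact H3.
    + eapply cong_trans. exact H6. rewrite app_assoc. apply cong_app_r. exact H4.
Qed.

Lemma T_neg_id {S} (R : word S -> word S -> Prop) a p' Q :
  T R (neg a) (a ++ p', Q) (p', Q).
Proof.
  revert p'. induction a as [|s a IH]; intros p'.
  - apply peq_refl.
  - rewrite neg_cons. apply T_app. exists (a ++ p', Q). split.
    + apply T_single. exists []. simpl. rewrite !app_nil_r. split; apply cong_refl.
    + apply IH.
Qed.

Lemma T_neg_bwd {S} (R : word S -> word S -> Prop) s a p q p' q' t :
  cong R (s :: a ++ p') (p ++ t) -> cong R q' (q ++ t) -> T R (neg (s :: a)) (p, q) (p', q').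
Proof.
  intros H1 H2. rewrite neg_cons. apply T_app. exists (a ++ p', q'). split.
  - apply T_single. exists t. simpl. auto.
  - apply T_neg_id.
Qed.

Lemma T_local {S} (R : word S -> word S -> Prop) u v u' v' x z : u <> [] ->
  cong R (u ++ v') (v ++ u') -> T R (pos v' ++ neg u') x z -> T R (neg u ++ pos v) x z.
Proof.
  intros Hu Hc H. destruct x as [p q]. destruct z as [p2 q2].
  apply T_app in H. destruct H as [[p1 q1] [H1 H2]].
  apply T_neg_fwd in H1. destruct H1 as [t [H3 H4]].
  apply T_pos in H2. destruct H2 as [H5 H6]. simpl in *.
  apply T_app. exists (v ++ p, q). split.
  - apply T_pos. apply peq_refl.
  - destruct u as [|s u]; [congruence|]. apply (T_neg_bwd _ _ _ _ _ _ _ t).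
    + change (s :: u ++ p2) with ((s :: u) ++ p2).
      eapply cong_trans. apply cong_app_l. exact H5.
      rewrite app_assoc. eapply cong_trans. apply cong_app_r. exact Hc.
      rewrite <- !app_assoc. apply cong_app_l. exact H3.
    + eapply cong_trans; eauto.
Qed.

Lemma T_ctx {S} (R : word S -> word S -> Prop) w1 w2 A B :
  (forall x z, T R B x z -> T R A x z) ->
  forall x z, T R (w1 ++ B ++ w2) x z -> T R (w1 ++ A ++ w2) x z.
Proof.
  intros HAB x z H. apply T_app in H. destruct H as [y [H1 H2]].
  apply T_app in H1. destruct H1 as [y' [H3 H4]].
  apply T_app. exists y. split; auto. apply T_app. eauto.
Qed.

Lemma T_rrev {S} (R : word S -> word S -> Prop) w w' :
  rrev R w w' -> forall x z, T R w' x z -> T R w x z.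
Proof.
  induction 1 as [|w1 w2 w3 Hs Hst IH]; auto.
  intros x z H. apply IH in H. clear IH Hst. revert x z H.
  destruct Hs as [w1 w2 u Hu|w1 w2 u v u' v' Hu Hv Hr].
  - intros x z H. change (T R (w1 ++ [] ++ w2) x z) in H. revert H.
    rewrite (app_assoc (neg u) (pos u) w2). apply T_ctx.
    intros x0 z0 H. eapply (T_local _ _ _ [] []); eauto. rewrite !app_nil_r. apply cong_refl.
  - rewrite (app_assoc (neg u) (pos v) w2), (app_assoc (pos v') (neg u') w2). apply T_ctx. intros x0 z0 H. eapply T_local; eauto. apply cong_rel'. auto.
Qed.

Lemma rrev_sound {S} (R : word S -> word S -> Prop) : positive_rels R ->
  forall a b, rrev R (neg a ++ pos b) [] -> cong R a b.
Proof.
  intros HP a b H. assert (HT := T_rrev R _ _ H ([],[]) ([],[]) (peq_refl R _)).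
  apply T_app in HT. destruct HT as [[p1 q1] [H1 H2]].
  apply T_pos in H1. destruct H1 as [H3 H4]. simpl in *.
  apply T_neg_fwd in H2. destruct H2 as [t [H5 H6]].
  apply (cong_nil R HP) in H6. destruct H6 as [H6 _]. specialize (H6 eq_refl).
  apply app_eq_nil in H6. destruct H6; subst. rewrite !app_nil_r in *.
  eapply cong_trans; eauto.
Qed.


Fixpoint npf {S} (w : sword S) : Prop :=
  match w with
  | [] => True
  | x :: w' => (match x, w' with inr _, inl _ :: _ => False | _, _ => True end) /\ npf w'
  end.

Fixpoint pnf {S} (w : sword S) : Prop :=
  match w with
  | [] => True
  | x :: w' => (match x, w' with inl _, inr _ :: _ => False | _, _ => True end) /\ pnf w'
  end.

Lemma npf_pat {S} (w1 w2 : sword S) s t : ~ npf (w1 ++ inr s :: inl t :: w2).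
Proof. induction w1; simpl; tauto. Qed.
Lemma pnf_pat {S} (w1 w2 : sword S) s t : ~ pnf (w1 ++ inl s :: inr t :: w2).
Proof. induction w1; simpl; tauto. Qed.

Lemma neg_last {S} (s : S) u : exists w, neg (s :: u) = w ++ [inr s].
Proof. exists (neg u). reflexivity. Qed.

Lemma rrev_step_np {S} (R : word S -> word S -> Prop) w w' : rrev_step R w w' -> ~ npf w.
Proof.
  destruct 1 as [w1 w2 u Hu|w1 w2 u v u' v' Hu Hv Hr].
  - destruct u as [|s u]; [congruence|]. destruct (neg_last s u) as [w E]. rewrite E.
    simpl. replace (w1 ++ (w ++ [inr s]) ++ inl s :: pos u ++ w2) with
      ((w1 ++ w) ++ inr s :: inl s :: (pos u ++ w2)) by (rewrite <- !app_assoc; reflexivity).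
    apply npf_pat.
  - destruct u as [|s u]; [congruence|]. destruct v as [|t v]; [congruence|].
    destruct (neg_last s u) as [w E]. rewrite E.
    simpl. replace (w1 ++ (w ++ [inr s]) ++ inl t :: pos v ++ w2) with
      ((w1 ++ w) ++ inr s :: inl t :: (pos v ++ w2)) by (rewrite <- !app_assoc; reflexivity).
    apply npf_pat.
Qed.

Lemma lrev_step_pn {S} (R : word S -> word S -> Prop) w w' : lrev_step R w w' -> ~ pnf w.
Proof.
  destruct 1 as [w1 w2 u Hu|w1 w2 u v u' v' Hu Hv Hr].
  - destruct u as [|s u]; [congruence|]. destruct (@exists_last _ (s :: u)) as [u0 [a E]]. congruence.
    unfold pos. rewrite E. unfold neg. rewrite !map_app, rev_app_distr. simpl.
    replace (w1 ++ (map inl u0 ++ [inl a]) ++ inr a :: rev (map inr u0) ++ w2) with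
      ((w1 ++ map inl u0) ++ inl a :: inr a :: (rev (map inr u0) ++ w2)) by (rewrite <- !app_assoc; reflexivity).
    apply pnf_pat.
  - destruct u as [|s u]; [congruence|]. destruct v as [|t v]; [congruence|].
    destruct (@exists_last _ (s :: u)) as [u0 [a E]]. congruence.
    destruct (@exists_last _ (t :: v)) as [v0 [b E']]. congruence.
    unfold pos. rewrite E. unfold neg. rewrite E'. rewrite !map_app, rev_app_distr. simpl.
    replace (w1 ++ (map inl u0 ++ [inl a]) ++ inr b :: rev (map inr v0) ++ w2) with
      ((w1 ++ map inl u0) ++ inl a :: inr b :: (rev (map inr v0) ++ w2)) by (rewrite <- !app_assoc; reflexivity).
    apply pnf_pat.
Qed.

Lemma npf_inr {S} (l : list S) : npf (map inr l : sword S).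
Proof. induction l as [|a l IH]; simpl; auto. split; auto. destruct l; simpl; auto. Qed.
Lemma pnf_inl {S} (l : list S) : pnf (map inl l : sword S).
Proof. induction l as [|a l IH]; simpl; auto. split; auto. destruct l; simpl; auto. Qed.

Lemma npf_posneg {S} (a b : list S) : npf (pos a ++ neg b).
Proof.
  unfold pos, neg. rewrite <- map_rev. generalize (rev b). intro l.
  induction a; simpl. apply npf_inr. split; auto.
Qed.
Lemma pnf_negpos {S} (a b : list S) : pnf (neg a ++ pos b).
Proof.
  unfold pos, neg. rewrite <- map_rev. generalize (rev a). intro l.
  induction l; simpl. apply pnf_inl. split; auto.
Qed.

Lemma star_term {S} (st : sword S -> sword S -> Prop) (P : sword S -> Prop) :
  (forall w w', st w w' -> ~ P w) -> forall w z, star st w z -> P w -> z = w.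
Proof. intros H w z Hs. destruct Hs; auto. intro. exfalso. eapply H; eauto. Qed.

Lemma map_inj_l {A B} (f : A -> B) (Hf : forall x y, f x = f y -> x = y) l1 l2 :
  map f l1 = map f l2 -> l1 = l2.
Proof.
  revert l2; induction l1; destruct l2; simpl; intros; try congruence.
  injection H; intros. f_equal; auto.
Qed.

Lemma split_lr {S} (a c : list S) (b d : list S) :
  map (@inl S S) a ++ map inr b = map inl c ++ map inr d -> a = c /\ b = d.
Proof.
  revert c; induction a as [|x a IH]; destruct c as [|y c]; simpl; intros E.
  - split; auto. eapply map_inj_l; [|exact E]. intros; congruence.
  - destruct b; simpl in E; congruence.
  - destruct d; simpl in E; congruence.
  - injection E; intros E1 E2. destruct (IH _ E1). subst. split; auto.
Qed.

Lemma split_rl {S} (a c : list S) (b d : list S) :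
  map (@inr S S) a ++ map inl b = map inr c ++ map inl d -> a = c /\ b = d.
Proof.
  revert c; induction a as [|x a IH]; destruct c as [|y c]; simpl; intros E.
  - split; auto. eapply map_inj_l; [|exact E]. intros; congruence.
  - destruct b; simpl in E; congruence.
  - destruct d; simpl in E; congruence.
  - injection E; intros E1 E2. destruct (IH _ E1). subst. split; auto.
Qed.

Lemma posneg_inj {S} (a b c d : list S) : pos a ++ neg b = pos c ++ neg d -> a = c /\ b = d.
Proof.
  unfold pos, neg. rewrite <- !map_rev. intro E. apply split_lr in E. destruct E as [E1 E2].
  split; auto. rewrite <- (rev_involutive b), <- (rev_involutive d). congruence.
Qed.
Lemma negpos_inj {S} (a b c d : list S) : neg a ++ pos b = neg c ++ pos d -> a = c /\ b = d.
Proof.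
  unfold pos, neg. rewrite <- !map_rev. intro E. apply split_rl in E. destruct E as [E1 E2].
  split; auto. rewrite <- (rev_involutive a), <- (rev_involutive c). congruence.
Qed.

Lemma len1 {A} (l : list A) : l <> [] -> length l <= 1 -> exists a, l = [a].
Proof. destruct l as [|a [|]]; simpl; intros; try congruence; try lia. eauto. Qed.

Lemma rrev_step_two {S} (R : word S -> word S -> Prop) : cond_C R -> forall s w',
  rrev_step R [inr s; inl s] w' -> w' = [] \/ exists v, w' = pos v ++ neg v.
Proof.
  intros HC s w' H. inversion H as [w1 w2 u Hu E1 E2|w1 w2 u v u' v' Hu Hv Hr E1 E2]; subst.
  - left. assert (L := f_equal (@length _) E1). unfold neg, pos in L.
    rewrite !length_app, length_rev, !length_map in L. simpl in L.
    destruct u; [congruence|]. simpl in L.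
    destruct w1; [|simpl in L; lia]. destruct w2; [reflexivity|simpl in L; lia].
  - right. assert (L := f_equal (@length _) E1). unfold neg, pos in L.
    rewrite !length_app, length_rev, !length_map in L. simpl in L.
    destruct u as [|a u0]; [congruence|]. destruct v as [|b v0]; [congruence|].
    simpl in L. destruct u0, v0, w1, w2; simpl in L; try lia.
    simpl in E1. injection E1; intros; subst.
    assert (v' = u').
    { destruct Hr as [Hr|Hr]; apply HC in Hr; destruct Hr as [Hr _]; simpl in Hr.
      + eapply Hr; reflexivity.
      + symmetry. eapply Hr; reflexivity. }
    subst. exists u'. simpl. rewrite app_nil_r. reflexivity.
Qed.

Lemma lrev_step_two {S} (R : word S -> word S -> Prop) : cond_C R -> forall s w',
  lrev_step R [inl s; inr s] w' -> w' = [] \/ exists v, w' = neg v ++ pos v.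
Proof.
  intros HC s w' H. inversion H as [w1 w2 u Hu E1 E2|w1 w2 u v u' v' Hu Hv Hr E1 E2]; subst.
  - left. assert (L := f_equal (@length _) E1). unfold neg, pos in L.
    rewrite !length_app, length_rev, !length_map in L. simpl in L.
    destruct u; [congruence|]. simpl in L.
    destruct w1; [|simpl in L; lia]. destruct w2; [reflexivity|simpl in L; lia].
  - right. assert (L := f_equal (@length _) E1). unfold neg, pos in L.
    rewrite !length_app, length_rev, !length_map in L. simpl in L.
    destruct u as [|a u0]; [congruence|]. destruct v as [|b v0]; [congruence|].
    simpl in L. destruct u0, v0, w1, w2; simpl in L; try lia.
    simpl in E1. injection E1; intros; subst.
    assert (v' = u').
    { destruct Hr as [Hr|Hr]; apply HC in Hr; destruct Hr as [_ Hr].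
      + eapply Hr; reflexivity.
      + symmetry. eapply Hr; reflexivity. }
    subst. exists u'. simpl. rewrite app_nil_r. reflexivity.
Qed.


Lemma star_first {S} (st : sword S -> sword S -> Prop) w z :
  star st w z -> z = w \/ exists w2, st w w2 /\ star st w2 z.
Proof. destruct 1; eauto. Qed.

Lemma lcancel1 {S} (R : word S -> word S -> Prop) : r_complete R -> cond_C R ->
  forall s u v, cong R (s :: u) (s :: v) -> cong R u v.
Proof.
  intros HR HC s u v H. destruct (HR [s] [s] v u H) as [u2 [v2 [w [H1 [H2 H3]]]]].
  assert (v2 = u2).
  { simpl in H1. unfold rrev in H1. destruct (star_first _ _ _ H1) as [Ez|[w2 [Hs Hst]]].
    - exfalso. pose proof (npf_posneg v2 u2) as K. rewrite Ez in K. simpl in K. tauto.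
    - assert (Hw : exists v, w2 = pos v ++ neg v).
      { destruct (rrev_step_two R HC s w2 Hs) as [->|Hv]; auto. exists []. reflexivity. }
      destruct Hw as [v0 ->].
      apply (star_term _ npf) in Hst; [|intros; eapply rrev_step_np; eauto| apply npf_posneg].
      apply posneg_inj in Hst. destruct Hst; subst; auto. }
  subst. eapply cong_trans; eauto. apply cong_sym; auto.
Qed.

Lemma rcancel1 {S} (R : word S -> word S -> Prop) : l_complete R -> cond_C R ->
  forall s u v, cong R (u ++ [s]) (v ++ [s]) -> cong R u v.
Proof.
  intros HR HC s u v H. destruct (HR [s] [s] v u H) as [u2 [v2 [w [H1 [H2 H3]]]]].
  assert (v2 = u2).
  { simpl in H1. unfold lrev in H1. destruct (star_first _ _ _ H1) as [Ez|[w2 [Hs Hst]]].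
    - exfalso. pose proof (pnf_negpos v2 u2) as K. rewrite Ez in K. simpl in K. tauto.
    - assert (Hw : exists v, w2 = neg v ++ pos v).
      { destruct (lrev_step_two R HC s w2 Hs) as [->|Hv]; auto. exists []. reflexivity. }
      destruct Hw as [v0 ->].
      apply (star_term _ pnf) in Hst; [|intros; eapply lrev_step_pn; eauto| apply pnf_negpos].
      apply negpos_inj in Hst. destruct Hst; subst; auto. }
  subst. eapply cong_trans; eauto. apply cong_sym; auto.
Qed.

Lemma lcancel {S} (R : word S -> word S -> Prop) : r_complete R -> cond_C R ->
  forall x u v, cong R (x ++ u) (x ++ v) -> cong R u v.
Proof.
  intros HR HC x. induction x as [|s x IH]; simpl; auto.
  intros u v H. apply IH. eapply lcancel1; eauto.
Qed.

Lemma rcancel {S} (R : word S -> word S -> Prop) : l_complete R -> cond_C R ->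
  forall x u v, cong R (u ++ x) (v ++ x) -> cong R u v.
Proof.
  intros HR HC x. induction x as [|s x IH]; intros u v H.
  - rewrite !app_nil_r in H; auto.
  - eapply rcancel1; eauto. apply IH. rewrite <- !app_assoc. exact H.
Qed.

Lemma ore_A {S} (R : word S -> word S -> Prop) (S' : word S -> Prop) :
  (forall u v, S' u -> S' v -> exists u' v', S' u' /\ S' v' /\ cong R (u ++ v') (v ++ u')) ->
  forall V x, Forall S' V -> S' x ->
  exists x' V', S' x' /\ Forall S' V' /\ cong R (x ++ concat V') (concat V ++ x').
Proof.
  intros HE V. induction V as [|y V IH]; intros x HV Hx.
  - exists x, []. simpl. rewrite app_nil_r. repeat split; auto. apply cong_refl.
  - inversion HV; subst. destruct (HE x y Hx H1) as [x1 [y1 [Hx1 [Hy1 Hc]]]].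
    destruct (IH x1 H2 Hx1) as [x2 [V2 [Hx2 [HV2 Hc2]]]].
    exists x2, (y1 :: V2). repeat split; auto. simpl.
    eapply cong_trans. rewrite app_assoc. apply cong_app_r. exact Hc.
    rewrite <- app_assoc. rewrite <- app_assoc. apply cong_app_l. exact Hc2.
Qed.

Lemma ore_B {S} (R : word S -> word S -> Prop) (S' : word S -> Prop) :
  (forall u v, S' u -> S' v -> exists u' v', S' u' /\ S' v' /\ cong R (u ++ v') (v ++ u')) ->
  forall U V, Forall S' U -> Forall S' V ->
  exists U' V', Forall S' U' /\ Forall S' V' /\ cong R (concat U ++ concat V') (concat V ++ concat U').
Proof.
  intros HE U. induction U as [|x U IH]; intros V HU HV.
  - exists [], V. simpl. rewrite app_nil_r. repeat split; auto. apply cong_refl.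
  - inversion HU; subst. destruct (ore_A R S' HE V x HV H1) as [x1 [V1 [Hx1 [HV1 Hc]]]].
    destruct (IH V1 H2 HV1) as [U2 [V2 [HU2 [HV2 Hc2]]]].
    exists (x1 :: U2), V2. repeat split; auto. simpl.
    rewrite <- app_assoc. eapply cong_trans. apply cong_app_l. exact Hc2.
    rewrite app_assoc. eapply cong_trans. apply cong_app_r. exact Hc.
    rewrite <- app_assoc. apply cong_refl.
Qed.

Lemma ore {S} (R : word S -> word S -> Prop) : positive_rels R -> cond_Er R ->
  forall u v : word S, exists u' v', cong R (u ++ v') (v ++ u').
Proof.
  intros HP [S' [H1 H2]] u v.
  assert (HE : forall u v, S' u -> S' v -> exists u' v', S' u' /\ S' v' /\ cong R (u ++ v') (v ++ u')).
  { intros a b Ha Hb. destruct (H2 a b Ha Hb) as [a' [b' [Ha' [Hb' Hr]]]].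
    exists a', b'. repeat split; auto. apply rrev_sound in Hr; auto. }
  assert (Hc : forall w : word S, concat (map (fun s => [s]) w) = w).
  { induction w; simpl; congruence. }
  assert (Hf : forall w : word S, Forall S' (map (fun s => [s]) w)).
  { induction w; simpl; constructor; auto. }
  destruct (ore_B R S' HE _ _ (Hf u) (Hf v)) as [U' [V' [_ [_ Hr]]]].
  rewrite !Hc in Hr. eauto.
Qed.


Lemma cong_in {S} (R : word S -> word S -> Prop) P Q A B :
  cong R A B -> cong R (P ++ A ++ Q) (P ++ B ++ Q).
Proof. intro H. apply cong_app_l, cong_app_r, H. Qed.

Ltac norm := simpl; rewrite ?app_nil_r, <- ?app_assoc, ?app_nil_r; simpl.
Ltac norm_in H := simpl in H; rewrite ?app_nil_r, <- ?app_assoc, ?app_nil_r in H; simpl in H.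
Ltac step P Q H := eapply cong_trans;
  [ let K := fresh in pose proof (cong_in _ P Q _ _ H) as K; norm_in K; exact K | ].
Ltac stepb P Q H := eapply cong_trans;
  [ let K := fresh in pose proof (cong_in _ P Q _ _ (cong_sym H)) as K; norm_in K; exact K | ].

Definition feq {S} (R : word S -> word S -> Prop) (p p' : word S * word S) :=
  exists c d, cong R (fst p ++ c) (fst p' ++ d) /\ cong R (snd p ++ c) (snd p' ++ d).

Lemma feq_refl {S} (R : word S -> word S -> Prop) p : feq R p p.
Proof. exists [], []. split; apply cong_refl. Qed.
Lemma feq_sym {S} (R : word S -> word S -> Prop) p q : feq R p q -> feq R q p.
Proof. intros [c [d [H1 H2]]]. exists d, c. split; apply cong_sym; auto. Qed.
Lemma feq_trans {S} (R : word S -> word S -> Prop)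
  (HO : forall u v : word S, exists u' v', cong R (u ++ v') (v ++ u')) p q r :
  feq R p q -> feq R q r -> feq R p r.
Proof.
  destruct p as [x y], q as [x1 y1], r as [x2 y2]. simpl.
  intros [c [d [H1 H2]]] [e [f [H3 H4]]]. simpl in *.
  destruct (HO d e) as [h [g Hg]].
  exists (c ++ g), (f ++ h). split; norm.
  - step (@nil S) g H1. step x1 (@nil S) Hg. step (@nil S) h H3. apply cong_refl.
  - step (@nil S) g H2. step y1 (@nil S) Hg. step (@nil S) h H4. apply cong_refl.
Qed.

Definition step {S} (of : word S -> word S -> word S * word S) (l : S + S) (p : word S * word S) :=
  match l with
  | inl s => (s :: fst p, snd p)
  | inr s => (snd (of [s] (fst p)), snd p ++ fst (of [s] (fst p)))
  end.

Definition F {S} of (p : word S * word S) (w : sword S) := fold_right (step of) p w.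

Inductive gbase {S} (R : word S -> word S -> Prop) : sword S -> sword S -> Prop :=
| gb1 s : gbase R [inl s; inr s] []
| gb2 s : gbase R [inr s; inl s] []
| gb3 x y : R x y -> gbase R (pos x) (pos y).

Inductive geq {S} (R : word S -> word S -> Prop) : sword S -> sword S -> Prop :=
| geq_ctx a b x y : gbase R x y -> geq R (a ++ x ++ b) (a ++ y ++ b)
| geq_refl x : geq R x x
| geq_sym x y : geq R x y -> geq R y x
| geq_trans x y z : geq R x y -> geq R y z -> geq R x z.

Lemma step_resp {S} (R : word S -> word S -> Prop)
  (HO : forall u v : word S, exists u' v', cong R (u ++ v') (v ++ u'))
  (HL : forall x u v : word S, cong R (x ++ u) (x ++ v) -> cong R u v)
  of (ofP : forall u v, cong R (u ++ snd (of u v)) (v ++ fst (of u v))) l p q :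
  feq R p q -> feq R (step of l p) (step of l q).
Proof.
  destruct p as [x y], q as [X Y]. intros [c [d [H1 H2]]]. simpl in *.
  destruct l as [s|s]; simpl.
  - exists c, d. simpl. split; auto. apply (cong_app_l R [s]); auto.
  - pose proof (ofP [s] x) as Px. pose proof (ofP [s] X) as PX.
    destruct (of [s] x) as [s1 x1]. destruct (of [s] X) as [S1 X1]. simpl in *.
    destruct (HO s1 c) as [b [a Hab]].
    destruct (HO S1 (d ++ b)) as [f [e Hf]].
    exists (a ++ f), e. split.
    + apply (HL [s]). norm.
      step (@nil S) (a ++ f) Px. step x f Hab. step (@nil S) (b ++ f) H1.
      stepb X (@nil S) Hf. stepb (@nil S) e PX. apply cong_refl.
    + norm. step y f Hab. step (@nil S) (b ++ f) H2. stepb Y (@nil S) Hf. apply cong_refl.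
Qed.

Lemma F_app {S} of (p : word S * word S) a b : F of p (a ++ b) = F of (F of p b) a.
Proof. unfold F. apply fold_right_app. Qed.

Lemma F_pos {S} of (p : word S * word S) a : F of p (pos a) = (a ++ fst p, snd p).
Proof. induction a; simpl. destruct p; auto. unfold F in *. simpl. rewrite IHa. reflexivity. Qed.

Lemma F_resp {S} (R : word S -> word S -> Prop)
  (HO : forall u v : word S, exists u' v', cong R (u ++ v') (v ++ u'))
  (HL : forall x u v : word S, cong R (x ++ u) (x ++ v) -> cong R u v)
  of (ofP : forall u v, cong R (u ++ snd (of u v)) (v ++ fst (of u v))) a p q :
  feq R p q -> feq R (F of p a) (F of q a).
Proof.
  induction a; simpl; auto. intro H. unfold F; simpl. apply step_resp; auto.
Qed.

Lemma base_ok {S} (R : word S -> word S -> Prop)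
  (HL : forall x u v : word S, cong R (x ++ u) (x ++ v) -> cong R u v)
  of (ofP : forall u v, cong R (u ++ snd (of u v)) (v ++ fst (of u v))) x y :
  gbase R x y -> forall p, feq R (F of p x) (F of p y).
Proof.
  destruct 1 as [s|s|u v H]; intros [p q]; unfold F; simpl.
  - pose proof (ofP [s] p) as Pp. destruct (of [s] p) as [s1 x1]. simpl in *.
    exists [], s1. simpl. rewrite !app_nil_r. split; auto. apply cong_refl.
  - pose proof (ofP [s] (s :: p)) as Pp. destruct (of [s] (s :: p)) as [s1 x1]. simpl in *.
    apply (HL [s]) in Pp.
    exists [], s1. simpl. rewrite !app_nil_r. split; auto. apply cong_refl.
  - fold (F of (p, q) (pos u)). fold (F of (p, q) (pos v)). rewrite !F_pos. simpl.
    exists [], []. simpl. split; [|apply cong_refl]. apply cong_app_r. apply cong_app_r. apply cong_R. auto.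
Qed.

Lemma geq_feq {S} (R : word S -> word S -> Prop)
  (HO : forall u v : word S, exists u' v', cong R (u ++ v') (v ++ u'))
  (HL : forall x u v : word S, cong R (x ++ u) (x ++ v) -> cong R u v)
  of (ofP : forall u v, cong R (u ++ snd (of u v)) (v ++ fst (of u v))) w w' :
  geq R w w' -> forall p, feq R (F of p w) (F of p w').
Proof.
  induction 1; intro p.
  - rewrite !F_app. apply F_resp; auto. apply (base_ok R HL of ofP); auto.
  - apply feq_refl.
  - apply feq_sym; auto.
  - eapply feq_trans; eauto.
Qed.


Definition swap {S} (l : S + S) : S + S := match l with inl s => inr s | inr s => inl s end.
Definition sinv {S} (w : sword S) : sword S := rev (map swap w).

Lemma geq_app_l {S} (R : word S -> word S -> Prop) a x y : geq R x y -> geq R (a ++ x) (a ++ y).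
Proof.
  induction 1.
  - rewrite (app_assoc a a0 (x ++ b)), (app_assoc a a0 (y ++ b)). apply geq_ctx; auto.
  - apply geq_refl.
  - apply geq_sym; auto.
  - eapply geq_trans; eauto.
Qed.
Lemma geq_app_r {S} (R : word S -> word S -> Prop) b x y : geq R x y -> geq R (x ++ b) (y ++ b).
Proof.
  induction 1.
  - rewrite <- !app_assoc. apply geq_ctx; auto.
  - apply geq_refl.
  - apply geq_sym; auto.
  - eapply geq_trans; eauto.
Qed.
Lemma geq_app {S} (R : word S -> word S -> Prop) a b x y :
  geq R a b -> geq R x y -> geq R (a ++ x) (b ++ y).
Proof. intros. eapply geq_trans. apply geq_app_r; eauto. apply geq_app_l; auto. Qed.
Lemma geq_base {S} (R : word S -> word S -> Prop) x y : gbase R x y -> geq R x y.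
Proof. intro H. pose proof (geq_ctx R [] [] _ _ H). simpl in H0. rewrite !app_nil_r in H0. auto. Qed.

Lemma geq_two {S} (R : word S -> word S -> Prop) l : geq R [l; swap l] [].
Proof. destruct l; simpl; apply geq_base; constructor. Qed.
Lemma geq_two' {S} (R : word S -> word S -> Prop) l : geq R [swap l; l] [].
Proof. destruct l; simpl; apply geq_base; constructor. Qed.

Lemma inv_r {S} (R : word S -> word S -> Prop) w : geq R (w ++ sinv w) [].
Proof.
  induction w as [|l w IH]; simpl. apply geq_refl.
  unfold sinv in *. simpl. rewrite app_assoc.
  change (l :: (w ++ rev (map swap w)) ++ [swap l]) with ([l] ++ (w ++ rev (map swap w)) ++ [swap l]).
  eapply geq_trans. apply geq_app_l. apply geq_app_r. exact IH. simpl. apply geq_two.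
Qed.
Lemma inv_l {S} (R : word S -> word S -> Prop) w : geq R (sinv w ++ w) [].
Proof.
  induction w as [|l w IH]; simpl. apply geq_refl.
  unfold sinv in *. simpl. rewrite <- app_assoc.
  eapply geq_trans; [|exact IH]. apply geq_app_l.
  apply (geq_app_r R w [swap l; l] []). apply geq_two'.
Qed.

Lemma sinv_resp {S} (R : word S -> word S -> Prop) a b : geq R a b -> geq R (sinv a) (sinv b).
Proof.
  intro H. apply geq_trans with (sinv a ++ (b ++ sinv b)).
  - rewrite <- (app_nil_r (sinv a)) at 1. apply geq_app_l. apply geq_sym, inv_r.
  - apply geq_trans with (sinv a ++ (a ++ sinv b)).
    + apply geq_app_l, geq_app_r, geq_sym, H.
    + rewrite app_assoc. rewrite <- (app_nil_l (sinv b)) at 2. apply geq_app_r, inv_l.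
Qed.

Lemma sinv_pos {S} (y : word S) : sinv (pos y) = neg y.
Proof. unfold sinv, pos, neg. rewrite map_map. reflexivity. Qed.

Lemma cong_geq {S} (R : word S -> word S -> Prop) u v : cong R u v -> geq R (pos u) (pos v).
Proof.
  induction 1.
  - unfold pos. rewrite !map_app. apply geq_ctx. constructor. auto.
  - apply geq_refl.
  - apply geq_sym; auto.
  - eapply geq_trans; eauto.
Qed.

Lemma neg_app {S} (a b : word S) : neg (a ++ b) = neg b ++ neg a.
Proof. unfold neg. rewrite map_app, rev_app_distr. reflexivity. Qed.

Lemma frac_form {S} (R : word S -> word S -> Prop)
  (HO : forall u v : word S, exists u' v', cong R (u ++ v') (v ++ u')) w :
  exists x y, geq R w (pos x ++ neg y).
Proof.
  induction w as [|l w [x [y IH]]].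
  - exists [], []. apply geq_refl.
  - destruct l as [s|s].
    + exists (s :: x), y. apply (geq_app_l R [inl s]) in IH. exact IH.
    + destruct (HO [s] x) as [s' [x' H]].
      exists x', (y ++ s'). rewrite neg_app.
      apply (geq_app_l R [inr s]) in IH. eapply geq_trans. exact IH.
      rewrite (app_assoc [inr s] (pos x) (neg y)), (app_assoc (pos x') (neg s') (neg y)). apply geq_app_r.
      apply cong_geq in H.
      apply geq_trans with ([inr s] ++ pos (x ++ s') ++ neg s').
      { unfold pos at 2. rewrite map_app. fold (pos x) (pos s'). rewrite <- app_assoc.
        apply geq_app_l. rewrite <- (app_nil_r (pos x)) at 1. apply geq_app_l.
        apply geq_sym. rewrite <- sinv_pos. apply inv_r. }
      apply geq_trans with ([inr s] ++ pos ([s] ++ x') ++ neg s').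
      { apply geq_app_l, geq_app_r, geq_sym, H. }
      change ([inr s] ++ pos ([s] ++ x') ++ neg s') with ([inr s; inl s] ++ (pos x' ++ neg s')).
      apply (geq_app_r R _ [inr s; inl s] []). apply geq_base. constructor.
Qed.


Definition Qt {S} (R : word S -> word S -> Prop) := {P : sword S -> Prop | exists w, P = geq R w}.
Definition cls {S} (R : word S -> word S -> Prop) (w : sword S) : Qt R :=
  exist _ (geq R w) (ex_intro _ w eq_refl).
Definition rep {S} {R : word S -> word S -> Prop} (q : Qt R) : sword S :=
  proj1_sig (constructive_indefinite_description _ (proj2_sig q)).

Lemma sig_ext {S} (R : word S -> word S -> Prop) (a b : Qt R) : proj1_sig a = proj1_sig b -> a = b.
Proof. destruct a, b; simpl; intro; subst. f_equal. apply proof_irrelevance. Qed.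

Lemma cls_rep {S} (R : word S -> word S -> Prop) (q : Qt R) : cls R (rep q) = q.
Proof.
  apply sig_ext. simpl. unfold rep. destruct (constructive_indefinite_description _ _). simpl. auto.
Qed.

Lemma cls_eq {S} (R : word S -> word S -> Prop) a b : geq R a b -> cls R a = cls R b.
Proof.
  intro H. apply sig_ext. simpl. apply functional_extensionality. intro x.
  apply propositional_extensionality. split; intro K.
  - eapply geq_trans; [apply geq_sym; eauto| auto].
  - eapply geq_trans; eauto.
Qed.

Lemma cls_inj {S} (R : word S -> word S -> Prop) a b : cls R a = cls R b -> geq R a b.
Proof.
  intro E. apply (f_equal (@proj1_sig _ _)) in E. simpl in E.
  assert (K : geq R b b) by apply geq_refl. rewrite <- E in K. exact K.
Qed.

Lemma rep_cls {S} (R : word S -> word S -> Prop) w : geq R (rep (cls R w)) w.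
Proof. apply cls_inj. apply cls_rep. Qed.

Definition qmul {S} (R : word S -> word S -> Prop) (a b : Qt R) := cls R (rep a ++ rep b).
Definition qinv {S} (R : word S -> word S -> Prop) (a : Qt R) := cls R (sinv (rep a)).
Definition qone {S} (R : word S -> word S -> Prop) := cls R [].

Definition qgroup {S} (R : word S -> word S -> Prop) : group.
Proof.
  refine (@Group (Qt R) (qmul R) (qone R) (qinv R) _ _ _ _ _); unfold qmul, qinv, qone.
  - intros x y z. apply cls_eq. eapply geq_trans. apply geq_app_l. apply rep_cls.
    eapply geq_trans; [|apply geq_app_r; apply geq_sym; apply rep_cls].
    rewrite app_assoc. apply geq_refl.
  - intro x. rewrite <- (cls_rep R x) at 2. apply cls_eq.
    eapply geq_trans. apply geq_app_r. apply rep_cls. apply geq_refl.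
  - intro x. rewrite <- (cls_rep R x) at 2. apply cls_eq.
    eapply geq_trans. apply geq_app_l. apply rep_cls. rewrite app_nil_r. apply geq_refl.
  - intro x. apply cls_eq. eapply geq_trans. apply geq_app_r. apply rep_cls. apply inv_l.
  - intro x. apply cls_eq. eapply geq_trans. apply geq_app_l. apply rep_cls. apply inv_r.
Defined.

Theorem proposition7p1 (S : Type) (R : word S -> word S -> Prop) :
  inhabited S ->
  positive_rels R ->
  complete R ->
  cond_C R ->
  cond_Er R ->
  embeds_in_group_of_fractions R.
Proof.
  intros _ HP [Hr Hl] HC HE.
  pose proof (ore R HP HE) as HO.
  assert (HL : forall x u v : word S, cong R (x ++ u) (x ++ v) -> cong R u v) by (apply lcancel; auto).
  assert (HRc : forall x u v : word S, cong R (u ++ x) (v ++ x) -> cong R u v) by (apply rcancel; auto).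
  assert (HO' : forall u v : word S, exists p : word S * word S, cong R (u ++ snd p) (v ++ fst p)).
  { intros u v. destruct (HO u v) as [a [b H]]. exists (a, b). exact H. }
  set (of := fun u v => proj1_sig (constructive_indefinite_description _ (HO' u v))).
  assert (ofP : forall u v, cong R (u ++ snd (of u v)) (v ++ fst (of u v))).
  { intros u v. unfold of. destruct (constructive_indefinite_description _ _). auto. }
  exists (qgroup R), (fun u => cls R (pos u)).
  split; [|split; [|split]].
  - reflexivity.
  - intros u v. simpl. unfold qmul. apply cls_eq. unfold pos at 1. rewrite map_app.
    apply geq_sym. apply geq_app; apply rep_cls.
  - intros u v. split.
    + intro E. apply cls_inj in E.
      pose proof (geq_feq R HO HL of ofP _ _ E ([], [])) as K.
      rewrite !F_pos in K. destruct K as [c [d [K1 K2]]]. simpl in *. rewrite !app_nil_r in K1.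
      apply (HRc c). eapply cong_trans. exact K1. apply cong_app_l. apply cong_sym. exact K2.
    + intro H. apply cls_eq. apply cong_geq. exact H.
  - intro g. destruct (frac_form R HO (rep g)) as [x [y H]].
    exists x, y. simpl. unfold qmul, qinv. rewrite <- (cls_rep R g). apply cls_eq.
    eapply geq_trans. exact H. apply geq_sym. apply geq_app. apply rep_cls.
    eapply geq_trans. apply rep_cls. rewrite <- sinv_pos. apply sinv_resp. apply rep_cls.
Qed.
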